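(* Consider a parallel system (so $\phi(s)=1$ if and only if $s_k=1$ for at least one $k$), with an arbitrary joint prior distribution of the component states, inspection error rates $\epsilon_{FA},\epsilon_{FS}\in[0,1/2)$ identical for all components, failure cost $C_F>0$ and nonnegative repair costs $C_{R,1},\dots,C_{R,N}$. Then for every component $c_k$, $\mathrm{VoI}_L(k)$ equals the global-metric value of information $\mathrm{VoI}_G(k)$ computed with the concave function $l^*(p)=\min\{C_F\,p,\ \min_m C_{R,m}\}$; consequently, for any two components with $p_i\le p_j$ we have $\mathrm{VoI}_L(i)\ge\mathrm{VoI}_L(j)$, so the most reliable component has the highest local VoI, as under the global metric.
   Context: A system consists of $N$ binary components $c_1,\dots,c_N$ with random joint state $s\in\{0,1\}^N$ ($s_k=1$: working; $s_k=0$: failed), with arbitrary prior distribution; the system state is $u=\phi(s)$ ($u=0$: failure), $p_k=\mathbb{P}[s_k=0]$. Inspecting $c_k$ yields a binary observation $y_k$ (alarm $0$, silence $1$) which, given $s$, depends only on $s_k$, with $\mathbb{P}[y_k=1\mid s_k=0]=\epsilon_{FS}$, $\mathbb{P}[y_k=0\mid s_k=1]=\epsilon_{FA}$; $h_k=\mathbb{P}[y_k=0]$, and $p_{\omega|y_k=b}=\mathbb{P}[u=0\mid y_k=b]$. Local metric: an action is a vector $A=(a_1,\dots,a_N)\in\{0,1\}^N$ ($a_k=1$: replace $c_k$). Replacement is perfect: the post-action state $s'$ has $s'_k=1$ if $a_k=1$ and $s'_k=s_k$ otherwise. The loss is $\mathcal{L}(s',A)=C_F(1-\phi(s'))+\sum_k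 a_kC_{R,k}$. The prior loss is $L^L_\pi=\min_A\mathbb{E}[\mathcal{L}(s',A)]$; the posterior loss given $y_k=c$ is $L^L_{\omega|y_k=c}=\min_A\mathbb{E}[\mathcal{L}(s',A)\mid y_k=c]$; $L^L_\omega(k)=h_kL^L_{\omega|y_k=0}+(1-h_k)L^L_{\omega|y_k=1}$; and $\mathrm{VoI}_L(k)=L^L_\pi-L^L_\omega(k)$. Global metric: for a concave $l^*:[0,1]\to\mathbb{R}$, with $p_\pi=\mathbb{P}[u=0]$, $\mathrm{VoI}_G(k)=l^*(p_\pi)-[h_k\,l^*(p_{\omega|y_k=0})+(1-h_k)\,l^*(p_{\omega|y_k=1})]$ (terms with zero probability omitted). *)

(* Defs.v *)
From HB Require Import structures.
From mathcomp Require Import all_boot all_order all_algebra.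
Set Implicit Arguments. Unset Strict Implicit. Unset Printing Implicit Defensive.
Import Order.TTheory GRing.Theory Num.Theory.
Local Open Scope ring_scope.

Section Defs.
Variable R : realFieldType.
Variable N : nat.

(* joint component state s : s k = true means c_k working *)
Definition state := {ffun 'I_N -> bool}.
(* action: A k = true means replace c_k *)
Definition action := {ffun 'I_N -> bool}.

Definition phi_par (s : state) : bool := [exists k, s k].

Definition post (s : state) (A : action) : state := [ffun m => A m || s m].

Definition loss (CF : R) (CR : 'I_N -> R) (s : state) (A : action) : R :=
  CF * (~~ phi_par (post s A))%:R + \sum_(m < N) (A m)%:R * CR m.

(* minimum over all actions (the default element is itself an action,
   so this is exactly min_A F A) *)
Definition minA (F : action -> R) : R :=
  \big[Num.min/F [ffun => false]]_(A : action) F A.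

(* observation likelihood P[y_k = y | s_k = sk]; y = false : alarm (0),
   y = true : silence (1) *)
Definition lik (eFA eFS : R) (y sk : bool) : R :=
  if sk then (if y then 1 - eFA else eFA)
  else (if y then eFS else 1 - eFS).

Variable P : {ffun state -> R}.
Variables eFA eFS CF : R.
Variable CR : 'I_N -> R.

Definition pfail (k : 'I_N) : R := \sum_(s : state) P s * (~~ s k)%:R.

Definition pobs (k : 'I_N) (c : bool) : R :=
  \sum_(s : state) P s * lik eFA eFS c (s k).

Definition L_prior : R := minA (fun A => \sum_(s : state) P s * loss CF CR s A).

Definition L_post (k : 'I_N) (c : bool) : R :=
  minA (fun A => (\sum_(s : state) P s * lik eFA eFS c (s k) * loss CF CR s A)
                 / pobs k c).

(* weighted term, omitted when the conditioning event has zero probability *)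
Definition wterm (w x : R) : R := if w == 0 then 0 else w * x.

Definition L_omega (k : 'I_N) : R :=
  wterm (pobs k false) (L_post k false) + wterm (pobs k true) (L_post k true).

Definition VoI_L (k : 'I_N) : R := L_prior - L_omega k.

Definition p_pi : R := \sum_(s : state) P s * (~~ phi_par s)%:R.

Definition p_post (k : 'I_N) (b : bool) : R :=
  (\sum_(s : state) P s * lik eFA eFS b (s k) * (~~ phi_par s)%:R) / pobs k b.

Definition VoI_G (lstar : R -> R) (k : 'I_N) : R :=
  lstar p_pi - (wterm (pobs k false) (lstar (p_post k false))
                + wterm (pobs k true) (lstar (p_post k true))).

End Defs.

Definition lstar_par (R : realFieldType) (n : nat) (CF : R) (CR : 'I_n.+1 -> R)
  (p : R) : R :=
  Num.min (CF * p) (\big[Num.min/CR ord0]_(m < n.+1) CR m).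

(* Main.v *)
Require Import Defs.
From HB Require Import structures.
From mathcomp Require Import all_boot all_order all_algebra.
From mathcomp Require Import ring lra.
Import Order.TTheory GRing.Theory Num.Theory.
Local Open Scope ring_scope.

Section Aux.
Variable R : realFieldType.
Variable n : nat.
Variable CF : R.
Variable CR : 'I_n.+1 -> R.
Hypothesis hCR : forall m, 0 <= CR m.

Let c := \big[Num.min/CR ord0]_(m < n.+1) CR m.
Let A0 : action n.+1 := [ffun => false].
Definition cost (A : action n.+1) : R := \sum_(m < n.+1) (A m)%:R * CR m.

Lemma c_le m : c <= CR m.
Proof. by rewrite /c; apply: (@ge_bigmin_seq _ _ _ _ _ m) => //; rewrite mem_index_enum. Qed.

Lemma c_eq : exists m, c = CR m.
Proof.
rewrite /c; apply: (big_ind (fun x => exists m, x = CR m)); first by exists ord0.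
  move=> x y [i ->] [j ->]; rewrite minEle; case: ifP => _; by eexists.
by move=> i _; exists i.
Qed.

Lemma loss_eq s A : loss CF CR s A =
  if A == A0 then CF * (~~ phi_par s)%:R else cost A.
Proof.
rewrite /loss; case: eqP => [->|/eqP hA].
  rewrite big1 ?addr0; last by move=> m _; rewrite ffunE mul0r.
  congr (_ * (~~ _)%:R); rewrite /post; congr phi_par; apply/ffunP => m.
  by rewrite !ffunE.
have [m hm] : exists m, A m.
  apply/existsP; apply: contraR hA; rewrite negb_exists => /forallP h.
  by apply/eqP/ffunP => m; rewrite ffunE; apply/negbTE/h.
have -> : phi_par (post s A) by apply/existsP; exists m; rewrite ffunE hm.
by rewrite mulr0 add0r.
Qed.


Lemma cost_ge A : A != A0 -> c <= cost A.
Proof.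
move=> hA.
have [m hm] : exists m, A m.
  apply/existsP; apply: contraR hA; rewrite negb_exists => /forallP h.
  by apply/eqP/ffunP => m; rewrite ffunE; apply/negbTE/h.
rewrite /cost (bigD1 m) //= hm mul1r.
apply: (le_trans (c_le m)); rewrite lerDl; apply: sumr_ge0 => i _.
by apply: mulr_ge0 => //; rewrite ler0n.
Qed.

Lemma cost_single m : cost [ffun i => i == m] = CR m.
Proof.
rewrite /cost (bigD1 m) //= ffunE eqxx mul1r big1 ?addr0 //.
by move=> i /negbTE hi; rewrite ffunE hi mul0r.
Qed.

Lemma single_ne0 m : [ffun i => i == m] != A0.
Proof. by apply/eqP => /ffunP /(_ m); rewrite !ffunE eqxx. Qed.

Lemma minA_char (F : action n.+1 -> R) v :
  (forall A, v <= F A) -> (exists A, F A = v) -> Defs.minA F = v.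
Proof.
move=> hlb [A hA]; apply/le_anti/andP; split.
  rewrite /Defs.minA (bigD1 A) //= -hA; by rewrite ge_min lexx.
rewrite /Defs.minA; apply: (big_ind (fun x => v <= x)) => //.
by move=> x y hx hy; rewrite le_min hx hy.
Qed.

Lemma minA_key (w : state n.+1 -> R) (t : R) (F : action n.+1 -> R)
  (hF : forall A, F A = (\sum_s w s * loss CF CR s A) * t)
  (hW : 0 <= (\sum_s w s) * t) :
  Defs.minA F = Num.min (CF * (\sum_s w s * (~~ phi_par s)%:R) * t) (c * ((\sum_s w s) * t)).
Proof.
have hF0 : F A0 = CF * (\sum_s w s * (~~ phi_par s)%:R) * t.
  rewrite hF; have -> : \sum_s w s * loss CF CR s A0 = CF * (\sum_s w s * (~~ phi_par s)%:R).
    rewrite mulr_sumr; apply: eq_bigr => s _.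
    by rewrite loss_eq eqxx mulrCA.
  by [].
have hF1 A : A != A0 -> F A = cost A * ((\sum_s w s) * t).
  move=> hA; rewrite hF.
  have -> : \sum_s w s * loss CF CR s A = cost A * (\sum_s w s).
    rewrite mulr_sumr; apply: eq_bigr => s _.
    by rewrite loss_eq (negbTE hA) mulrC.
  by rewrite mulrA.
apply: minA_char.
  move=> A; case: (eqVneq A A0) => [->|hA]; first by rewrite hF0 ge_min lexx.
  rewrite hF1 // ge_min; apply/orP; right.
  by apply: ler_wpM2r => //; apply: cost_ge.
case: (leP (CF * (\sum_s w s * (~~ phi_par s)%:R) * t) (c * ((\sum_s w s) * t))) => h.
  by exists A0; rewrite hF0.
have [m hm] := c_eq.
by exists [ffun i => i == m]; rewrite hF1 ?single_ne0 // cost_single -hm.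
Qed.

End Aux.

Lemma alg (R : realFieldType) (X c e hi hj : R) :
  0 <= X -> 0 <= c -> 0 <= e -> 0 <= hi -> hi <= hj -> hj <= 1 - e ->
  Num.min (X * (1 - e)) (c * hi) + Num.min (X * e) (c * (1 - hi)) <=
  Num.min (X * (1 - e)) (c * hj) + Num.min (X * e) (c * (1 - hj)).
Proof.
move=> hX hc he hi0 hij hj1.
have f1 : c * hi <= c * hj by rewrite ler_wpM2l.
case: (leP X c) => hXc.
  have f2 : X * e <= c * (1 - hi).
    have : 0 <= c * (1 - hi - e) by apply: mulr_ge0 => //; lra.
    have : 0 <= (c - X) * e by apply: mulr_ge0 => //; lra.
    lra.
  have f3 : X * e <= c * (1 - hj).
    have : 0 <= c * (1 - hj - e) by apply: mulr_ge0 => //; lra.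
    have : 0 <= (c - X) * e by apply: mulr_ge0 => //; lra.
    lra.
  rewrite (min_l f2) (min_l f3) lerD2r.
  case: (leP (X * (1 - e)) (c * hi)); case: (leP (X * (1 - e)) (c * hj)); lra.
have f2 : c * hi <= X * (1 - e).
  have : 0 <= c * (1 - e - hi) by apply: mulr_ge0 => //; lra.
  have : 0 <= (X - c) * (1 - e) by apply: mulr_ge0 => //; lra.
  lra.
have f3 : c * hj <= X * (1 - e).
  have : 0 <= c * (1 - e - hj) by apply: mulr_ge0 => //; lra.
  have : 0 <= (X - c) * (1 - e) by apply: mulr_ge0 => //; lra.
  lra.
rewrite (min_r f2) (min_r f3).
case: (leP (X * e) (c * (1 - hi))); case: (leP (X * e) (c * (1 - hj))); lra.
Qed.

Section Main.
Variable R : realFieldType.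
Variable n : nat.
Variable P : {ffun state n.+1 -> R}.
Hypothesis P_sum1 : \sum_(s : state n.+1) P s = 1.
Variables eFA eFS CF : R.
Variable CR : 'I_n.+1 -> R.
Hypothesis hCR : forall m, 0 <= CR m.

Lemma prior_eq : L_prior P CF CR = lstar_par CF CR (p_pi P).
Proof.
rewrite /L_prior (@minA_key R n CF CR hCR P 1) ?P_sum1 ?mulr1 //.
by move=> A; rewrite mulr1.
Qed.

Lemma post_eq k b : pobs P eFA eFS k b != 0 ->
  L_post P eFA eFS CF CR k b = lstar_par CF CR (p_post P eFA eFS k b).
Proof.
move=> h0.
rewrite /L_post (@minA_key R n CF CR hCR (fun s => P s * lik eFA eFS b (s k)) (pobs P eFA eFS k b)^-1) //.
  by rewrite -/(pobs P eFA eFS k b) divff // mulr1 /lstar_par /p_post mulrA.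
by rewrite -/(pobs P eFA eFS k b) divff.
Qed.

Lemma part1 k : VoI_L P eFA eFS CF CR k = VoI_G P eFA eFS (lstar_par CF CR) k.
Proof.
rewrite /VoI_L /VoI_G /L_omega prior_eq /wterm.
by case: eqP => [|/eqP h1]; case: eqP => [|/eqP h2]; rewrite ?post_eq.
Qed.


Hypothesis P_ge0 : forall s, 0 <= P s.
Hypothesis heFA : 0 <= eFA < 1 / 2.
Hypothesis heFS : 0 <= eFS < 1 / 2.
Hypothesis hCF : 0 < CF.

Let c := \big[Num.min/CR ord0]_(m < n.+1) CR m.

Lemma c_ge0 : 0 <= c.
Proof. rewrite /c; have [m ->] := @c_eq R n CR; exact: hCR. Qed.

Lemma lik_false x : lik eFA eFS false x = eFA + (1 - eFS - eFA) * (~~ x)%:R.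
Proof. case: x => /=; rewrite ?mulr0 ?mulr1 ?addr0; lra. Qed.

Lemma lik_sum x : lik eFA eFS true x + lik eFA eFS false x = 1.
Proof. case: x => /=; lra. Qed.

Lemma pobs_false k : pobs P eFA eFS k false = eFA + (1 - eFS - eFA) * pfail P k.
Proof.
rewrite /pobs /pfail.
under eq_bigr => s _ do rewrite lik_false mulrDr.
rewrite big_split /= -mulr_suml P_sum1 mul1r mulr_sumr; congr (_ + _).
by apply: eq_bigr => s _; rewrite mulrCA.
Qed.

Lemma pobs_true k : pobs P eFA eFS k true = 1 - pobs P eFA eFS k false.
Proof.
apply/eqP; rewrite eq_sym subr_eq -P_sum1 /pobs -big_split /=; apply/eqP.
by apply: eq_bigr => s _; rewrite -mulrDr lik_sum mulr1.
Qed.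

Lemma pfail_ge0 k : 0 <= pfail P k.
Proof. by apply: sumr_ge0 => s _; apply: mulr_ge0 => //; rewrite ler0n. Qed.

Lemma pfail_le1 k : pfail P k <= 1.
Proof.
rewrite -P_sum1; apply: ler_sum => s _.
by rewrite -[leRHS]mulr1 ler_wpM2l // lern1 leq_b1.
Qed.

Lemma ppi_ge0 : 0 <= p_pi P.
Proof. by apply: sumr_ge0 => s _; apply: mulr_ge0 => //; rewrite ler0n. Qed.

Lemma num_eq k b :
  \sum_s P s * lik eFA eFS b (s k) * (~~ phi_par s)%:R = lik eFA eFS b false * p_pi P.
Proof.
rewrite /p_pi mulr_sumr; apply: eq_bigr => s _.
case hs: (phi_par s); first by rewrite !mulr0.
have -> : s k = false.
  by move/negbT: hs; rewrite /phi_par negb_exists => /forallP /(_ k) /negbTE.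
by rewrite mulrAC mulrC mulrA.
Qed.

Lemma wterm_eq h x : 0 <= h -> 0 <= x ->
  wterm h (lstar_par CF CR (x / h)) = Num.min (CF * x) (c * h).
Proof.
move=> h0 x0; rewrite /wterm /lstar_par -/c.
case: eqP => [->|/eqP hn].
  rewrite mulr0 min_r //; apply: mulr_ge0 => //; exact: ltW.
rewrite minr_pMr // mulrC; congr (Num.min _ _); last by rewrite mulrC.
by rewrite -mulrA mulfVK.
Qed.

Lemma pobs_ge0 k b : 0 <= pobs P eFA eFS k b.
Proof.
apply: sumr_ge0 => s _; apply: mulr_ge0 => //.
case/andP: heFA => ? ?; case/andP: heFS => ? ?; case: b; case: (s k) => /=; lra.
Qed.

Lemma voiG_eq k : VoI_G P eFA eFS (lstar_par CF CR) k =
  lstar_par CF CR (p_pi P) -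
  (Num.min (CF * ((1 - eFS) * p_pi P)) (c * (eFA + (1 - eFS - eFA) * pfail P k)) +
   Num.min (CF * (eFS * p_pi P)) (c * (1 - (eFA + (1 - eFS - eFA) * pfail P k)))).
Proof.
case/andP: heFS => ? ?.
rewrite /VoI_G /p_post !num_eq !wterm_eq ?pobs_ge0 //=.
- by rewrite pobs_true pobs_false.
- by apply: mulr_ge0; [lra | exact: ppi_ge0].
- by apply: mulr_ge0; [lra | exact: ppi_ge0].

Qed.

Lemma part2 i j : pfail P i <= pfail P j ->
  VoI_L P eFA eFS CF CR j <= VoI_L P eFA eFS CF CR i.
Proof.
move=> hij; rewrite !part1 !voiG_eq lerD2l lerN2.
case/andP: heFA => a1 a2; case/andP: heFS => b1 b2.
have := pfail_ge0 i; have := pfail_le1 j => p1 p2.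
have hd : 0 <= 1 - eFS - eFA by lra.
have m1 : (1 - eFS - eFA) * pfail P i <= (1 - eFS - eFA) * pfail P j by rewrite ler_wpM2l.
have m2 : (1 - eFS - eFA) * pfail P j <= (1 - eFS - eFA) by rewrite -[leRHS]mulr1 ler_wpM2l.
have m3 : 0 <= (1 - eFS - eFA) * pfail P i by apply: mulr_ge0.
rewrite !mulrA ![CF * eFS]mulrC -![eFS * CF * _]mulrA ![CF * (1 - eFS)]mulrC -![(1 - eFS) * CF * _]mulrA.
rewrite ![_ * (CF * _)]mulrC.
apply: alg; first (by apply: mulr_ge0; [exact: ltW | exact: ppi_ge0]); first exact: c_ge0; lra.
Qed.

End Main.

Theorem mainTheorem4 (R : realFieldType) (n : nat)
  (P : {ffun state n.+1 -> R})
  (P_ge0 : forall s, 0 <= P s) (P_sum1 : \sum_(s : state n.+1) P s = 1)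
  (eFA eFS CF : R) (CR : 'I_n.+1 -> R)
  (heFA : 0 <= eFA < 1 / 2) (heFS : 0 <= eFS < 1 / 2)
  (hCF : 0 < CF) (hCR : forall m, 0 <= CR m) :
  (forall k : 'I_n.+1,
     VoI_L P eFA eFS CF CR k = VoI_G P eFA eFS (lstar_par CF CR) k) /\
  (forall i j : 'I_n.+1,
     pfail P i <= pfail P j -> VoI_L P eFA eFS CF CR j <= VoI_L P eFA eFS CF CR i).
Proof.
split; first exact: part1.
exact: part2.
Qed.
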